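(* Let $\Gamma$ be a numerical semigroup with multiplicity $e$ and conductor $c$, let $\Gamma_e=\{0\}\cup(e+\Gamma)$ and $c'=c+e$. Then for every $k\in\mathbb N$ the following are equivalent: \begin{enumerate} \item $\delta^2_{\Gamma_e}(c'+e+k)=\delta^2_\Gamma(c+k)+2$; \item $\delta^1_\Gamma(c+e+k)=\delta^2_\Gamma(c+k)$. \end{enumerate}
   Context: A numerical semigroup is a subset $\Gamma\subseteq\mathbb N$ containing $0$, closed under addition, with finite complement; multiplicity = least positive element; conductor = least $c$ with $c+\mathbb N\subseteq\Gamma$. For a numerical semigroup $S$: $D_S(x)=\{s\in S:x-s\in S\}$, $\delta^1_S(m)=\min\{|D_S(m_1)|: m\le m_1\in S\}$, and $\delta^2_S(m)=\min\{|D_S(m_1)\cup D_S(m_2)|: m\le m_1<m_2,\ m_i\in S\}$. *)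

(* Defs.v *)
From mathcomp Require Import all_boot.
From Stdlib Require Import ClassicalEpsilon.
Set Implicit Arguments. Unset Strict Implicit. Unset Printing Implicit Defensive.

(* Least element of a set of naturals (unspecified if the set is empty). *)
Definition natmin (P : nat -> Prop) : nat :=
  epsilon (inhabits 0) (fun n => P n /\ forall k, P k -> n <= k).

Definition numerical_semigroup (G : nat -> bool) : Prop :=
  [/\ G 0,
      (forall a b, G a -> G b -> G (a + b)) &
      exists c, forall n, c <= n -> G n].

Definition multiplicity (G : nat -> bool) : nat := natmin (fun n => 0 < n /\ G n).

Definition conductor (G : nat -> bool) : nat :=
  natmin (fun c => forall n, c <= n -> G n).

Definition shiftsg (G : nat -> bool) (e : nat) : nat -> bool :=
  fun n => (n == 0) || ((e <= n) && G (n - e)).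

Definition inD (G : nat -> bool) (x s : nat) : bool :=
  [&& s <= x, G s & G (x - s)].

Definition cardD (G : nat -> bool) (x : nat) : nat :=
  count (inD G x) (iota 0 x.+1).

Definition cardD2 (G : nat -> bool) (x1 x2 : nat) : nat :=
  count (fun s => inD G x1 s || inD G x2 s) (iota 0 (maxn x1 x2).+1).

Definition delta1 (G : nat -> bool) (m : nat) : nat :=
  natmin (fun d => exists m1, [/\ m <= m1, G m1 & d = cardD G m1]).

Definition delta2 (G : nat -> bool) (m : nat) : nat :=
  natmin (fun d => exists m1 m2,
            [/\ m <= m1, m1 < m2, G m1, G m2 & d = cardD2 G m1 m2]).

(* Main.v *)
Require Import Defs.
From mathcomp Require Import all_boot zify.
From Stdlib Require Import Classical ClassicalEpsilon.
Set Warnings "-notation-overridden".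

Lemma natmin_spec (P : nat -> Prop) : (exists n, P n) ->
  P (natmin P) /\ forall k, P k -> natmin P <= k.
Proof.
move=> ex.
have h : exists n, P n /\ forall k, P k -> n <= k.
  case: ex => n Pn; elim/ltn_ind: n Pn => n IH Pn.
  case: (classic (exists k, P k /\ k < n)) => [[k [Pk lt]]|no].
    exact: IH k lt Pk.
  exists n; split => // k Pk; rewrite leqNgt; apply/negP => lt; apply: no; by exists k.
exact: (epsilon_spec (inhabits 0) _ h).
Qed.

Lemma inD_shift (G : nat -> bool) e y s : 0 < e -> G e -> G y -> G (y + e) ->
  inD (shiftsg G e) (y + e + e) s =
  [|| s == 0, s == y + e + e | (e <= s) && inD G y (s - e)].
Proof.
move=> e0 Ge Gy Gye; rewrite /inD /shiftsg.
have E1 : y + e + e - e = y + e by lia.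
have [->|s0] := eqVneq s 0.
  rewrite subn0 E1 Gye /=; lia.
have [->|sx] := eqVneq s (y + e + e).
  rewrite subnn E1 Gye /=; lia.
rewrite /=.
have [hs|hs] := leqP e s; last first.
  by rewrite /= andbF.
rewrite /=.
have [hx|hx] := leqP s (y + e + e); last first.
  by rewrite /= (_ : s - e <= y = false) //; lia.
rewrite (_ : (y + e + e - s == 0) = false) /=; last by lia.
rewrite (_ : y + e + e - s - e = y - (s - e)); last by lia.
rewrite (_ : (e <= y + e + e - s) = (s - e <= y)); last by lia.
by case: (s - e <= y); case: (G (s - e)); case: (G (y - (s - e))).
Qed.

Lemma count_or (p q : pred nat) s : (forall x, p x -> q x -> False) ->
  count (fun x => p x || q x) s = count p s + count q s.
Proof.
move=> H; elim: s => //= x s ->.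
case px: (p x); case qx: (q x) => //=; last lia.
by case: (H x).
Qed.

Lemma count1_iota a n : count (fun s => s == a) (iota 0 n) = (a < n).
Proof.
have -> : count (fun s => s == a) (iota 0 n) = count_mem a (iota 0 n).
  by apply: eq_count => s.
by rewrite count_uniq_mem ?iota_uniq // mem_iota.
Qed.

Lemma count_B (Q : pred nat) e y :
  (forall t, Q t -> t <= y) ->
  count (fun s => (e <= s) && Q (s - e)) (iota 0 (y + e + e).+1) =
  count Q (iota 0 y.+1).
Proof.
move=> HQ.
rewrite (_ : (y + e + e).+1 = e + (y.+1 + e)); last lia.
rewrite iotaD count_cat.
rewrite (eq_in_count (a2 := pred0)); last first.
  move=> s; rewrite mem_iota /= => h; apply/negbTE; lia.
rewrite count_pred0 add0n add0n.
rewrite (_ : iota e _ = map (addn e) (iota 0 (y.+1 + e))); last by rewrite -iotaDl addn0.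
rewrite count_map.
rewrite (eq_count (a2 := Q)); last first.
  by move=> t /=; rewrite leq_addr addKn.
rewrite iotaD count_cat.
rewrite [X in _ + X](eq_in_count (a2 := pred0)); last first.
  move=> s; rewrite mem_iota /= => h; apply/negP => /HQ; lia.
by rewrite count_pred0 addn0.
Qed.

Lemma card_shift (G : nat -> bool) e c y1 y2 : 0 < e -> G e ->
  (forall n, c <= n -> G n) -> c <= y1 -> y1 < y2 ->
  cardD2 (shiftsg G e) (y1 + e + e) (y2 + e + e) + ((y1 + e <= y2) && G (y2 - y1 - e))
  = 3 + cardD2 G y1 y2.
Proof.
move=> e0 Ge Hc cy1 y12.
have G1 : G y1 by apply: Hc.
have G2 : G y2 by apply: Hc; lia.
have G1e : G (y1 + e) by apply: Hc; lia.
have G2e : G (y2 + e) by apply: Hc; lia.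
rewrite /cardD2 !(maxn_idPr _); try lia.
set x1 := y1 + e + e; set x2 := y2 + e + e.
set Q := fun t => inD G y1 t || inD G y2 t.
set A := fun s => (s == 0) || ((s == x1) || (s == x2)).
set B := fun s => (e <= s) && Q (s - e).
have E : forall s, inD (shiftsg G e) x1 s || inD (shiftsg G e) x2 s = A s || B s.
  move=> s; rewrite /x1 /x2 !inD_shift // /A /B /Q -/x1 -/x2.
  move: (s == 0) (s == x1) (s == x2) (e <= s) (inD G y1 (s - e)) (inD G y2 (s - e)).
  by do 6!case.
rewrite (eq_count E).
have U := count_predUI A B (iota 0 x2.+1).
have CA : count A (iota 0 x2.+1) = 3.
  rewrite /A count_or; last by move=> x /eqP -> /=; rewrite /x1 /x2; lia.
  rewrite count_or; last by move=> x /eqP -> /=; rewrite /x1 /x2; lia.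
  rewrite !count1_iota /x1 /x2; lia.
have CB : count B (iota 0 x2.+1) = count Q (iota 0 y2.+1).
  apply: count_B => t; rewrite /Q /inD; lia.
have CAB : count (predI A B) (iota 0 x2.+1) = ((y1 + e <= y2) && G (y2 - y1 - e)).
  have E2 : forall s, predI A B s = (s == x1) && ((y1 + e <= y2) && G (y2 - y1 - e)).
    move=> s /=; rewrite /A /B /Q /inD.
    have [->|n1] := eqVneq s x1.
      rewrite /x1 /= (_ : y1 + e + e - e = y1 + e); last lia.
      rewrite G1e (_ : y2 - (y1 + e) = y2 - y1 - e); last lia.
      case: (y1 + e <= y2); case: (G (y2 - y1 - e)) => /=; lia.
    have [->|n2] := eqVneq s x2.
      rewrite /x2 /=; lia.
    have [->|n0] := eqVneq s 0.
      rewrite /=; lia.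
    by rewrite /=.
  rewrite (eq_count E2).
  case: ((y1 + e <= y2) && G (y2 - y1 - e)).
    under eq_count => s do rewrite andbT.
    rewrite count1_iota /x1 /x2; lia.
  by rewrite (eq_count (a2 := pred0)) ?count_pred0 // => s; rewrite andbF.
have : count (predU A B) (iota 0 x2.+1) = count (fun s => A s || B s) (iota 0 x2.+1) by [].
by move=> H; rewrite -H -CAB U CA CB.
Qed.

Lemma union_sub (G : nat -> bool) y1 y2 :
  (forall a b, G a -> G b -> G (a + b)) -> y1 <= y2 -> G (y2 - y1) ->
  cardD2 G y1 y2 = cardD G y2.
Proof.
move=> Gadd le Gd; rewrite /cardD2 /cardD (maxn_idPr le).
apply: eq_count => s /=.
case h: (inD G y1 s) => //=.
move: h; rewrite /inD => /and3P [h1 h2 h3].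
rewrite h2 (_ : y2 - s = (y1 - s) + (y2 - y1)); last lia.
rewrite Gadd //; lia.
Qed.

Lemma card_shift3 (G : nat -> bool) e c x1 x2 y1 y2 : 0 < e -> G e ->
  (forall n, c <= n -> G n) -> c <= y1 -> y1 < y2 ->
  x1 = y1 + e + e -> x2 = y2 + e + e ->
  [/\ 2 + cardD2 G y1 y2 <= cardD2 (shiftsg G e) x1 x2,
      cardD2 (shiftsg G e) x1 x2 = 2 + cardD2 G y1 y2 -> y1 + e <= y2 /\ G (y2 - y1 - e) &
      y1 + e <= y2 -> G (y2 - y1 - e) -> cardD2 (shiftsg G e) x1 x2 = 2 + cardD2 G y1 y2].
Proof.
move=> e0 Ge Hc cy y12 -> ->.
have := @card_shift G e c y1 y2 e0 Ge Hc cy y12.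
case: andP => [[h1 h2]|hn] /= CS.
  split; [lia | by [] | lia].
split; [lia | lia | move=> a b; case: hn; by split].
Qed.

Ltac slia := (repeat match goal with H : is_true (?g _) |- _ => is_var g; clear H end); lia.

Theorem lemma4p14 (G : nat -> bool) (k : nat) :
  numerical_semigroup G ->
  let e := multiplicity G in
  let c := conductor G in
  let Ge := shiftsg G e in
  let c' := c + e in
  (delta2 Ge (c' + e + k) = delta2 G (c + k) + 2 <->
   delta1 G (c + e + k) = delta2 G (c + k)).
Proof.
move=> [G0 Gadd [c0 Hc0]] e c Ge c'.
have [Hc _] := natmin_spec (fun c => forall n, c <= n -> G n) (ex_intro _ c0 Hc0).
have {}Hc : forall n, c <= n -> G n := Hc.
have [[e0 Ge_] _] := natmin_spec (fun n => 0 < n /\ G n)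
   (ex_intro _ c0.+1 (conj (ltn0Sn _) (Hc0 _ (leqnSn _)))).
have {}e0 : 0 < e := e0.
have {}Ge_ : G e := Ge_.
have Gen : forall n, c + e <= n -> Ge n.
  move=> n hn; rewrite /Ge /shiftsg; apply/orP; right.
  rewrite (_ : e <= n) /=; last slia.
  apply: Hc; slia.
have [[y1 [y2 [h1 h2 g1 g2 eqG]]] minG] := natmin_spec
  (fun d => exists m1 m2,
            [/\ c + k <= m1, m1 < m2, G m1, G m2 & d = cardD2 G m1 m2])
  (ex_intro _ _ (ex_intro _ (c + k) (ex_intro _ (c + k).+1
     (And5 (leqnn _) (ltnSn _) (Hc _ (leq_addr _ _)) (Hc _ (leq_trans (leq_addr k c) (leqnSn _))) erefl)))).
rewrite -/(delta2 G (c + k)) in eqG minG.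
have [[m [hm gm eqm]] min1] := natmin_spec
  (fun d => exists m1, [/\ c + e + k <= m1, G m1 & d = cardD G m1])
  (ex_intro _ _ (ex_intro _ (c + e + k) (And3 (leqnn _) (Hc _ (leq_trans (leq_addr e c) (leq_addr _ _))) erefl))).
rewrite -/(delta1 G (c + e + k)) in eqm min1.
have [[x1 [x2 [i1 i2 f1 f2 eqGe]]] minGe] := natmin_spec
  (fun d => exists m1 m2,
            [/\ c' + e + k <= m1, m1 < m2, Ge m1, Ge m2 & d = cardD2 Ge m1 m2])
  (ex_intro _ _ (ex_intro _ (c' + e + k) (ex_intro _ (c' + e + k).+1
     (And5 (leqnn _) (ltnSn _) (Gen (c' + e + k) ltac:(rewrite /c'; slia)) (Gen (c' + e + k).+1 ltac:(rewrite /c'; slia)) erefl)))).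
rewrite -/(delta2 Ge (c' + e + k)) in eqGe minGe.
have L1 : delta2 G (c + k) <= delta1 G (c + e + k).
  rewrite eqm -(@union_sub G (m - e) m Gadd); first last.
  - by rewrite (_ : m - (m - e) = e) //; slia.
  - slia.
  apply: minG; exists (m - e), m; split => //; try slia.
  apply: Hc; slia.
rewrite /c' in i1.
have [CSa CSb _] := @card_shift3 G e c x1 x2 (x1 - e - e) (x2 - e - e) e0 Ge_ Hc
  ltac:(slia) ltac:(slia) ltac:(slia) ltac:(slia).
rewrite -/Ge -eqGe in CSa CSb.
have LU : delta2 G (c + k) <= cardD2 G (x1 - e - e) (x2 - e - e).
  apply: minG; exists (x1 - e - e), (x2 - e - e).
  split => //; try slia; apply: Hc; slia.
split.
- move=> H; apply/eqP; rewrite eqn_leq L1 andbT.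
  have U : cardD2 G (x1 - e - e) (x2 - e - e) = delta2 G (c + k) by slia.
  have [l g] : x1 - e - e + e <= x2 - e - e /\ G (x2 - e - e - (x1 - e - e) - e).
    by apply: CSb; slia.
  rewrite -U (@union_sub G (x1 - e - e) (x2 - e - e) Gadd); first last.
  + rewrite (_ : x2 - e - e - (x1 - e - e) = (x2 - e - e - (x1 - e - e) - e) + e); last slia.
    exact: Gadd.
  + slia.
  apply: min1; exists (x2 - e - e); split => //; try slia.
  apply: Hc; slia.
- move=> H; apply/eqP; rewrite eqn_leq; apply/andP; split; last first.
    slia.
  have [_ _ CSc] := @card_shift3 G e c (m + e) (m + e + e) (m - e) m e0 Ge_ Hc
    ltac:(slia) ltac:(slia) ltac:(slia) erefl.
  have Gz : G (m - (m - e) - e) by rewrite (_ : m - (m - e) - e = 0) //; slia.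
  have {}CSc := CSc ltac:(slia) Gz.
  rewrite (@union_sub G (m - e) m Gadd) in CSc; first last.
  + by rewrite (_ : m - (m - e) = e) //; slia.
  + slia.
  have -> : delta2 G (c + k) + 2 = cardD2 Ge (m + e) (m + e + e) by rewrite /Ge; slia.
  apply: minGe; exists (m + e), (m + e + e); rewrite /c'.
  split => //; try slia; apply: Gen; slia.
Qed.
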